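(* Let $\gamma, \gamma_1$ be disjoint geodesics in $\mathbb{H}^3$ with common orthogonal $\eta$, and let their complex distance be $d_{\mathbb{C}}(\gamma,\gamma_1) = d + i\theta$, where $d>0$ is the length of $\eta$ and $\theta$ is a real representative of the angle, with $\theta \le \pi/2$. Let $P$ be the plane containing $\gamma$ and $\eta$. Let $y_1$ be a point of $\gamma_1$ and let $P_1$ be the plane containing $\gamma$ and $y_1$. Then the dihedral angle between $P$ and $P_1$ is at most $|\theta|/d$.
   Context: The complex distance $d+i\theta$ between two disjoint geodesics with common orthogonal $\eta$ has real part the length of $\eta$ and imaginary part the angle between $\gamma_1$ and the parallel transport along $\eta$ of the tangent direction of $\gamma$. *)

(* Defs.v *)
(* hyperboloid model of H^3 inside Minkowski space R^{1,3}. *)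
From Stdlib Require Import Reals.
Open Scope R_scope.

Record vec4 := V4 { c0 : R; c1 : R; c2 : R; c3 : R }.

Definition vadd (a b : vec4) : vec4 :=
  V4 (c0 a + c0 b) (c1 a + c1 b) (c2 a + c2 b) (c3 a + c3 b).
Definition vscale (k : R) (a : vec4) : vec4 :=
  V4 (k * c0 a) (k * c1 a) (k * c2 a) (k * c3 a).

Definition mdot (a b : vec4) : R :=
  - c0 a * c0 b + c1 a * c1 b + c2 a * c2 b + c3 a * c3 b.

Definition inH3 (x : vec4) : Prop := mdot x x = -1 /\ 0 < c0 x.

Definition unit_tangent (p v : vec4) : Prop :=
  inH3 p /\ mdot p v = 0 /\ mdot v v = 1.

Definition geod (p v : vec4) (t : R) : vec4 :=
  vadd (vscale (cosh t) p) (vscale (sinh t) v).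
Definition geod_vel (p v : vec4) (t : R) : vec4 :=
  vadd (vscale (sinh t) p) (vscale (cosh t) v).

Definition geodesic_set (p v : vec4) (x : vec4) : Prop :=
  exists t : R, x = geod p v t.

Definition is_geodesic (G : vec4 -> Prop) : Prop :=
  exists p v, unit_tangent p v /\ forall x, G x <-> geodesic_set p v x.

Definition direction_of (G : vec4 -> Prop) (x u : vec4) : Prop :=
  unit_tangent x u /\ forall y, G y <-> geodesic_set x u y.

(* Parallel transport of a tangent vector w at p along the geodesic
   s |-> geod p v s, from time 0 to time s (Levi-Civita transport in the
   hyperboloid model: the component along v is carried to the velocity,
   the component orthogonal to p and v is constant). *)
Definition ptransport (p v : vec4) (s : R) (w : vec4) : vec4 :=
  vadd w (vscale (mdot w v)
           (vadd (vscale (sinh s) p) (vscale (cosh s - 1) v))).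

Definition normal_of (P : vec4 -> Prop) (n : vec4) : Prop :=
  mdot n n = 1 /\ forall x, P x <-> (inH3 x /\ mdot x n = 0).

Definition is_plane (P : vec4 -> Prop) : Prop := exists n, normal_of P n.

Definition dihedral_angle (n n1 : vec4) : R := acos (Rabs (mdot n n1)).

(* Main.v *)
Require Import Defs.
From Stdlib Require Import Reals Lra.
Open Scope R_scope.
Notation k0 := Defs.c0. Notation k1 := Defs.c1. Notation k2 := Defs.c2. Notation k3 := Defs.c3.
Definition det3 (a1 a2 a3 b1 b2 b3 e1 e2 e3 : R) :=
  a1*(b2*e3-b3*e2) - a2*(b1*e3-b3*e1) + a3*(b1*e2-b2*e1).
Definition det4 (a b c d : vec4) :=
  k0 a * det3 (k1 b) (k2 b) (k3 b) (k1 c) (k2 c) (k3 c) (k1 d) (k2 d) (k3 d)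
- k1 a * det3 (k0 b) (k2 b) (k3 b) (k0 c) (k2 c) (k3 c) (k0 d) (k2 d) (k3 d)
+ k2 a * det3 (k0 b) (k1 b) (k3 b) (k0 c) (k1 c) (k3 c) (k0 d) (k1 d) (k3 d)
- k3 a * det3 (k0 b) (k1 b) (k2 b) (k0 c) (k1 c) (k2 c) (k0 d) (k1 d) (k2 d).
Definition gram (a b c d : vec4) :=
  det4 (V4 (mdot a a) (mdot a b) (mdot a c) (mdot a d))
       (V4 (mdot b a) (mdot b b) (mdot b c) (mdot b d))
       (V4 (mdot c a) (mdot c b) (mdot c c) (mdot c d))
       (V4 (mdot d a) (mdot d b) (mdot d c) (mdot d d)).
Lemma gram_det a b c d : gram a b c d = - (det4 a b c d)^2.
Proof. destruct a, b, c, d. unfold gram, det4, det3, mdot; simpl. ring. Qed.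
Definition edot (a y : vec4) := k0 a * k0 y + k1 a * k1 y + k2 a * k2 y + k3 a * k3 y.
Lemma cramer0 a b c d y :
  edot a y * det4 (V4 1 0 0 0) b c d + edot b y * det4 a (V4 1 0 0 0) c d
+ edot c y * det4 a b (V4 1 0 0 0) d + edot d y * det4 a b c (V4 1 0 0 0)
= det4 a b c d * k0 y.
Proof. destruct a, b, c, d, y. unfold edot, det4, det3; simpl. ring. Qed.
Lemma cramer1 a b c d y :
  edot a y * det4 (V4 0 1 0 0) b c d + edot b y * det4 a (V4 0 1 0 0) c d
+ edot c y * det4 a b (V4 0 1 0 0) d + edot d y * det4 a b c (V4 0 1 0 0)
= det4 a b c d * k1 y.
Proof. destruct a, b, c, d, y. unfold edot, det4, det3; simpl. ring. Qed.
Lemma cramer2 a b c d y :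
  edot a y * det4 (V4 0 0 1 0) b c d + edot b y * det4 a (V4 0 0 1 0) c d
+ edot c y * det4 a b (V4 0 0 1 0) d + edot d y * det4 a b c (V4 0 0 1 0)
= det4 a b c d * k2 y.
Proof. destruct a, b, c, d, y. unfold edot, det4, det3; simpl. ring. Qed.
Lemma cramer3 a b c d y :
  edot a y * det4 (V4 0 0 0 1) b c d + edot b y * det4 a (V4 0 0 0 1) c d
+ edot c y * det4 a b (V4 0 0 0 1) d + edot d y * det4 a b c (V4 0 0 0 1)
= det4 a b c d * k3 y.
Proof. destruct a, b, c, d, y. unfold edot, det4, det3; simpl. ring. Qed.

Lemma mdot_sym a b : mdot a b = mdot b a.
Proof. unfold mdot; ring. Qed.

Lemma ortho4_zero a b c d x :
  mdot a a = -1 -> mdot b b = 1 -> mdot c c = 1 -> mdot d d = 1 ->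
  mdot a b = 0 -> mdot a c = 0 -> mdot a d = 0 -> mdot b c = 0 ->
  mdot b d = 0 -> mdot c d = 0 ->
  mdot x a = 0 -> mdot x b = 0 -> mdot x c = 0 -> mdot x d = 0 ->
  k0 x = 0 /\ k1 x = 0 /\ k2 x = 0 /\ k3 x = 0.
Proof.
  intros Haa Hbb Hcc Hdd Hab Hac Had Hbc Hbd Hcd Hxa Hxb Hxc Hxd.
  assert (Hg := gram_det a b c d).
  unfold gram in Hg.
  rewrite (mdot_sym b a), (mdot_sym c a), (mdot_sym d a), (mdot_sym c b),
    (mdot_sym d b), (mdot_sym d c) in Hg.
  rewrite Haa, Hbb, Hcc, Hdd, Hab, Hac, Had, Hbc, Hbd, Hcd in Hg.
  unfold det4 at 1, det3 in Hg; simpl in Hg.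
  assert (Hne : det4 a b c d <> 0) by (intro H0; rewrite H0 in Hg; lra).
  set (y := V4 (- k0 x) (k1 x) (k2 x) (k3 x)).
  assert (Ea : edot a y = 0) by (rewrite <- Hxa; unfold edot, mdot, y; simpl; ring).
  assert (Eb : edot b y = 0) by (rewrite <- Hxb; unfold edot, mdot, y; simpl; ring).
  assert (Ec : edot c y = 0) by (rewrite <- Hxc; unfold edot, mdot, y; simpl; ring).
  assert (Ed : edot d y = 0) by (rewrite <- Hxd; unfold edot, mdot, y; simpl; ring).
  pose proof (cramer0 a b c d y) as C0. pose proof (cramer1 a b c d y) as C1.
  pose proof (cramer2 a b c d y) as C2. pose proof (cramer3 a b c d y) as C3.
  rewrite Ea, Eb, Ec, Ed in C0, C1, C2, C3. unfold y in *; simpl in *.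
  repeat split.
  - assert (det4 a b c d * k0 x = 0) by lra.
    destruct (Rmult_integral _ _ H); [contradiction|assumption].
  - assert (det4 a b c d * k1 x = 0) by lra.
    destruct (Rmult_integral _ _ H); [contradiction|assumption].
  - assert (det4 a b c d * k2 x = 0) by lra.
    destruct (Rmult_integral _ _ H); [contradiction|assumption].
  - assert (det4 a b c d * k3 x = 0) by lra.
    destruct (Rmult_integral _ _ H); [contradiction|assumption].
Qed.

Definition lin5 (x a b c d : vec4) (A B C D : R) : vec4 :=
  V4 (k0 x + A*k0 a + B*k0 b + C*k0 c + D*k0 d)
     (k1 x + A*k1 a + B*k1 b + C*k1 c + D*k1 d)
     (k2 x + A*k2 a + B*k2 b + C*k2 c + D*k2 d)
     (k3 x + A*k3 a + B*k3 b + C*k3 c + D*k3 d).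
Lemma mdot_lin5 x a b c d A B C D e :
  mdot (lin5 x a b c d A B C D) e =
  mdot x e + A * mdot a e + B * mdot b e + C * mdot c e + D * mdot d e.
Proof. unfold mdot, lin5; simpl; ring. Qed.

Lemma parseval a b c d x z :
  mdot a a = -1 -> mdot b b = 1 -> mdot c c = 1 -> mdot d d = 1 ->
  mdot a b = 0 -> mdot a c = 0 -> mdot a d = 0 -> mdot b c = 0 ->
  mdot b d = 0 -> mdot c d = 0 ->
  mdot x z = - mdot x a * mdot z a + mdot x b * mdot z b
             + mdot x c * mdot z c + mdot x d * mdot z d.
Proof.
  intros Haa Hbb Hcc Hdd Hab Hac Had Hbc Hbd Hcd.
  set (A := mdot x a). set (B := mdot x b). set (C := mdot x c). set (D := mdot x d).
  assert (H := ortho4_zero a b c d (lin5 x a b c d A (-B) (-C) (-D))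
     Haa Hbb Hcc Hdd Hab Hac Had Hbc Hbd Hcd).
  rewrite !mdot_lin5 in H.
  rewrite (mdot_sym b a), (mdot_sym c a), (mdot_sym d a), (mdot_sym c b),
    (mdot_sym d b), (mdot_sym d c) in H.
  rewrite Haa, Hbb, Hcc, Hdd, Hab, Hac, Had, Hbc, Hbd, Hcd in H.
  fold A B C D in H.
  destruct H as [H0 [H1 [H2 H3]]]; try (unfold A; ring); try (unfold B; ring);
    try (unfold C; ring); try (unfold D; ring).
  unfold lin5 in H0, H1, H2, H3; simpl in H0, H1, H2, H3.
  unfold mdot at 1 2 3 4 5.
  assert (E0 : k0 x = - A*k0 a + B*k0 b + C*k0 c + D*k0 d) by lra.
  assert (E1 : k1 x = - A*k1 a + B*k1 b + C*k1 c + D*k1 d) by lra.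
  assert (E2 : k2 x = - A*k2 a + B*k2 b + C*k2 c + D*k2 d) by lra.
  assert (E3 : k3 x = - A*k3 a + B*k3 b + C*k3 c + D*k3 d) by lra.
  rewrite E0, E1, E2, E3. ring.
Qed.

Lemma cosh_sinh_1 t : cosh t ^ 2 - sinh t ^ 2 = 1.
Proof.
  unfold cosh, sinh.
  assert (E : exp t * exp (- t) = 1) by (rewrite <- exp_plus; replace (t + - t) with 0 by ring; apply exp_0).
  nra.
Qed.

Lemma cosh_ge1 t : 1 <= cosh t.
Proof.
  unfold cosh.
  assert (E : exp t * exp (- t) = 1) by (rewrite <- exp_plus; replace (t + - t) with 0 by ring; apply exp_0).
  pose proof (exp_pos t). pose proof (exp_pos (-t)).
  assert (Q : (exp t + exp (-t))^2 >= 4).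
  { pose proof (pow2_ge_0 (exp t - exp (-t))). replace ((exp t + exp (-t))^2) with ((exp t - exp (-t))^2 + 4 * (exp t * exp (-t))) by ring. rewrite E. lra. }
  assert (exp t + exp (-t) >= 2) by nra. lra.
Qed.

Lemma sinh_ge_id d : 0 <= d -> d <= sinh d.
Proof.
  intro Hd.
  assert (pr : derivable (fun x => sinh x - x)).
  { intro x. exists (cosh x - 1). apply (derivable_pt_lim_minus sinh id x). apply derivable_pt_lim_sinh. apply derivable_pt_lim_id. }
  assert (Inc : increasing (fun x => sinh x - x)).
  { apply (nonneg_derivative_1 _ pr). intro x.
    rewrite (derive_pt_eq_0 _ x (cosh x - 1)). pose proof (cosh_ge1 x); lra.
    apply (derivable_pt_lim_minus sinh id x). apply derivable_pt_lim_sinh. apply derivable_pt_lim_id. }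
  specialize (Inc 0 d Hd). simpl in Inc. rewrite sinh_0 in Inc. lra.
Qed.

Lemma xcos_le_sin x : 0 <= x -> x <= PI / 2 -> x * cos x <= sin x.
Proof.
  intros H0 H1.
  pose proof PI_4.
  destruct (sin_bound x 0 H0) as [Hs _]. lra.
  destruct (cos_bound x 0) as [_ Hc]. lra. lra.
  unfold sin_approx, cos_approx, sin_term, cos_term in *. simpl in Hs, Hc.
  assert (Hc' : cos x <= 1 - x^2/2 + x^4/24) by (eapply Rle_trans; [exact Hc| right; field]).
  assert (Hs' : x - x^3/6 <= sin x) by (eapply Rle_trans; [right|exact Hs]; field).
  assert (Hm : x * cos x <= x * (1 - x^2/2 + x^4/24)) by (apply Rmult_le_compat_l; lra).
  assert (x <= 2) by lra.
  assert (0 <= x^3) by (apply pow_le; lra).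
  assert (x^2 <= 4) by nra.
  assert (x^5 <= 4 * x^3) by (replace (x^5) with (x^3 * x^2) by ring; nra).
  replace (x * (1 - x^2/2 + x^4/24)) with (x - x^3/2 + x^5/24) in Hm by field.
  lra.
Qed.

Lemma sin2_le x : sin x ^ 2 <= x ^ 2.
Proof.
  assert (K : forall y, 0 <= y -> sin y ^ 2 <= y ^ 2).
  { intros y Hy. destruct (Rle_lt_dec 1 y).
    - pose proof (SIN_bound y). nra.
    - destruct (Req_dec y 0) as [->|Hne]. rewrite sin_0. lra.
      pose proof (sin_lt_x y). pose proof (sin_ge_0 y). pose proof PI_RGT_0. pose proof PI2_1. nra. }
  destruct (Rle_lt_dec 0 x). apply K; lra.
  pose proof (K (-x)). rewrite sin_neg in H. nra.
Qed.

Lemma mdot_geod_l p v t z : mdot (geod p v t) z = cosh t * mdot p z + sinh t * mdot v z.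
Proof. unfold mdot, geod, vadd, vscale; simpl; ring. Qed.
Lemma mdot_vel_l p v t z : mdot (geod_vel p v t) z = sinh t * mdot p z + cosh t * mdot v z.
Proof. unfold geod_vel, vadd, vscale, mdot; simpl; ring. Qed.
Lemma mdot_pt p v s w z : mdot (ptransport p v s w) z =
  mdot w z + mdot w v * (sinh s * mdot p z + (cosh s - 1) * mdot v z).
Proof. unfold ptransport, vadd, vscale, mdot; simpl; ring. Qed.

Lemma sinh_pos d : 0 < d -> 0 < sinh d.
Proof. intro H. rewrite <- sinh_0. now apply sinh_lt. Qed.

Lemma final_ineq (a B c s d th : R) :
  0 < d -> B^2 + a^2 = 1 -> c^2 = sin th ^ 2 ->
  cosh s * sinh d * B + sinh s * c * a = 0 ->
  acos (Rabs a) <= Rabs th / d.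
Proof.
  intros Hd HBa Hc Heq.
  set (x := Rabs th / d).
  assert (Hx0 : 0 <= x) by (unfold x; apply Rmult_le_pos; [apply Rabs_pos| left; apply Rinv_0_lt_compat; lra]).
  assert (Hth : Rabs th = x * d) by (unfold x; field; lra).
  pose proof (Rabs_pos a) as Ha0.
  assert (Ha1 : Rabs a <= 1).
  { rewrite <- Rabs_R1. apply Rsqr_le_abs_0. unfold Rsqr. nra. }
  set (y := acos (Rabs a)).
  assert (Hy : 0 <= y <= PI) by apply acos_bound.
  assert (Hcy : cos y = Rabs a) by (apply cos_acos; lra).
  pose proof PI_RGT_0.
  assert (Hy2 : y <= PI / 2).
  { destruct (Rle_lt_dec y (PI/2)); auto.
    pose proof (cos_decreasing_1 (PI/2) y). rewrite cos_PI2 in H0. lra. }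
  destruct (Rle_lt_dec (PI/2) x). lra.
  assert (Hcx : cos x <= Rabs a).
  { pose proof (cos_ge_0 x) as Hc0. 
    pose proof (sin_ge_0 x) as Hs0.
    pose proof (xcos_le_sin x Hx0) as Hxs.
    pose proof (sinh_ge_id d) as Hsd.
    pose proof (sin2_le th) as Hst.
    pose proof (cosh_sinh_1 s) as Hcs.
    pose proof (cosh_sinh_1 d) as Hcd.
    pose proof (sinh_pos d Hd) as Hsdp.
    pose proof (cosh_ge1 s) as Hch.
    set (K := cosh s ^ 2 * sinh d ^ 2).
    set (S := sinh s ^ 2 * c ^ 2).
    assert (HK : 0 < K) by (unfold K; nra).
    assert (HS : 0 <= S) by (unfold S; nra).
    assert (E1 : (1 - a^2) * K = S * a^2).
    { unfold K, S. replace (1 - a^2) with (B^2) by lra.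
      replace (B^2 * (cosh s ^2 * sinh d^2)) with ((cosh s * sinh d * B)^2) by ring.
      assert (Q : cosh s * sinh d * B = -(sinh s*c*a)) by lra. rewrite Q. ring. }
    assert (M1 : x * cos x * d <= sin x * sinh d).
    { apply Rmult_le_compat; [apply Rmult_le_pos; [lra| apply Hc0; lra] | lra | apply Hxs; lra | apply Hsd; lra]. }
    assert (M2 : (x * cos x * d)^2 <= (sin x * sinh d)^2).
    { apply pow_incr. split; [|exact M1]. apply Rmult_le_pos; [apply Rmult_le_pos; [lra | apply Hc0; lra] | lra]. }
    assert (Hth2 : th ^ 2 = (x*d)^2) by (rewrite <- Hth; rewrite <- (pow2_abs th); reflexivity).
    assert (M3 : cos x ^ 2 * S <= sin x ^ 2 * K).
    { unfold S, K. rewrite Hc.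
      assert (sinh s ^2 <= cosh s ^2) by lra.
      assert (A1 : cos x ^ 2 * (sinh s ^ 2 * sin th ^ 2) <= cos x ^ 2 * (cosh s ^ 2 * (x*d)^2)).
      { apply Rmult_le_compat_l. apply pow2_ge_0. rewrite <- Hth2.
        apply Rmult_le_compat; try apply pow2_ge_0; lra. }
      assert (A2 : cos x ^ 2 * (cosh s ^ 2 * (x*d)^2) = cosh s ^ 2 * (x * cos x * d)^2) by ring.
      assert (A3 : sin x ^ 2 * (cosh s ^ 2 * sinh d ^ 2) = cosh s ^ 2 * (sin x * sinh d)^2) by ring.
      rewrite A3. eapply Rle_trans. exact A1. rewrite A2.
      apply Rmult_le_compat_l. apply pow2_ge_0. exact M2. }
    assert (Hsc : sin x ^ 2 = 1 - cos x ^ 2) by (pose proof (sin2_cos2 x); unfold Rsqr in *; nra).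
    assert (Ha2 : cos x ^ 2 <= a ^ 2).
    { rewrite Hsc in M3.
      assert ((a^2 - cos x ^2) * (K + S) >= 0) by nra. 
      destruct (Rle_lt_dec (cos x ^ 2) (a^2)); auto.
      nra. }
    rewrite <- (pow2_abs a) in Ha2.
    assert (0 <= cos x) by (apply Hc0; lra).
    nra. }
  destruct (Rle_lt_dec y x); auto.
  pose proof (cos_decreasing_1 x y). lra.
Qed.

Theorem lemma4p5
  (G G1 : vec4 -> Prop)          (* the geodesics gamma, gamma_1 *)
  (p v : vec4) (d : R)           (* eta : s |-> geod p v s, s in [0,d] *)
  (u u1 : vec4) (theta : R)
  (P P1 : vec4 -> Prop) (y1 : vec4) :
  is_geodesic G -> is_geodesic G1 ->
  (forall x, G x -> ~ G1 x) ->
  (* eta is the common orthogonal, from p on gamma to q = geod p v d on gamma_1 *)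
  unit_tangent p v -> 0 < d ->
  G p -> G1 (geod p v d) ->
  direction_of G p u -> direction_of G1 (geod p v d) u1 ->
  mdot u v = 0 -> mdot u1 (geod_vel p v d) = 0 ->
  (* theta is a real representative of the angle between gamma_1 and the
     parallel transport along eta of the direction of gamma *)
  cos theta = mdot (ptransport p v d u) u1 -> theta <= PI / 2 ->
  (* P : the plane containing gamma and eta *)
  is_plane P -> (forall x, G x -> P x) ->
  (forall s, 0 <= s <= d -> P (geod p v s)) ->
  (* P1 : the plane containing gamma and y1 in gamma_1 *)
  G1 y1 -> is_plane P1 -> (forall x, G x -> P1 x) -> P1 y1 ->
  forall n n1, normal_of P n -> normal_of P1 n1 ->
  dihedral_angle n n1 <= Rabs theta / d.
Proof.
  intros _ _ _ [[Hpp _] [Hpv Hvv]] Hd HGp _ [[_ [Hpu Huu]] HGu] [[_ [Hqu1 Hu1u1]] HG1u1]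
    Huv Hu1vel Hcos _ _ HGP HetaP HG1y1 _ HGP1 HP1y1 n n1 [Hnn HPn] [Hn1n1 HP1n1].
  assert (Hs1 : 0 < sinh 1) by (apply sinh_pos; lra).
  assert (HGu1 : G (geod p u 1)) by (apply HGu; exists 1; reflexivity).
  assert (Hpn : mdot p n = 0) by (apply (HPn p), HGP, HGp).
  assert (Hun : mdot u n = 0).
  { assert (H := proj2 (proj1 (HPn _) (HGP _ HGu1))). rewrite mdot_geod_l, Hpn in H.
    destruct (Rmult_integral (sinh 1) (mdot u n)); lra. }
  assert (Hvn : mdot v n = 0).
  { assert (H := proj2 (proj1 (HPn _) (HetaP d (conj (Rlt_le _ _ Hd) (Rle_refl d))))).
    rewrite mdot_geod_l, Hpn in H. pose proof (sinh_pos d Hd).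
    destruct (Rmult_integral (sinh d) (mdot v n)); lra. }
  assert (Hpn1 : mdot p n1 = 0) by (apply (HP1n1 p), HGP1, HGp).
  assert (Hun1 : mdot u n1 = 0).
  { assert (H := proj2 (proj1 (HP1n1 _) (HGP1 _ HGu1))). rewrite mdot_geod_l, Hpn1 in H.
    destruct (Rmult_integral (sinh 1) (mdot u n1)); lra. }
  assert (Hpu1 : mdot p u1 = 0 /\ mdot v u1 = 0).
  { rewrite mdot_geod_l in Hqu1. rewrite mdot_sym, mdot_vel_l in Hu1vel.
    pose proof (cosh_sinh_1 d) as E.
    assert (A : mdot p u1 = cosh d * (cosh d * mdot p u1 + sinh d * mdot v u1)
                 - sinh d * (sinh d * mdot p u1 + cosh d * mdot v u1)).
    { replace (mdot p u1) with (mdot p u1 * (cosh d ^2 - sinh d ^2)) at 1 by (rewrite E; ring). ring. }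
    assert (B : mdot v u1 = cosh d * (sinh d * mdot p u1 + cosh d * mdot v u1)
                 - sinh d * (cosh d * mdot p u1 + sinh d * mdot v u1)).
    { replace (mdot v u1) with (mdot v u1 * (cosh d ^2 - sinh d ^2)) at 1 by (rewrite E; ring). ring. }
    rewrite Hqu1, Hu1vel in A. rewrite Hqu1, Hu1vel in B. split; lra. }
  destruct Hpu1 as [Hpu1 Hvu1].
  rewrite mdot_pt, Huv in Hcos. replace (mdot u u1 + 0 * _) with (mdot u u1) in Hcos by ring.
  assert (Hvp : mdot p v = 0) by exact Hpv.
  assert (Hvu : mdot v u = 0) by (rewrite mdot_sym; exact Huv).
  pose proof (fun x z => parseval p v u n x z Hpp Hvv Huu Hnn Hpv Hpu Hpn Hvu Hvn Hun) as Par.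
  assert (Hn1 : 1 = mdot n1 v ^ 2 + mdot n1 n ^ 2).
  { rewrite <- Hn1n1, (Par n1 n1). rewrite (mdot_sym n1 p), (mdot_sym n1 u), Hpn1, Hun1. ring. }
  assert (Hu1 : 1 = mdot u1 u ^ 2 + mdot u1 n ^ 2).
  { rewrite <- Hu1u1, (Par u1 u1). rewrite (mdot_sym u1 p), (mdot_sym u1 v), Hpu1, Hvu1. ring. }
  assert (Hu1n1 : mdot u1 n1 = mdot u1 n * mdot n1 n).
  { rewrite (Par u1 n1). rewrite (mdot_sym u1 p), (mdot_sym u1 v), (mdot_sym n1 u), Hpu1, Hvu1, Hun1. ring. }
  destruct (proj1 (HG1u1 y1) HG1y1) as [s Hy1].
  assert (Hy : mdot y1 n1 = 0) by (apply (HP1n1 y1), HP1y1).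
  rewrite Hy1, mdot_geod_l, mdot_geod_l, Hpn1, Hu1n1 in Hy.
  unfold dihedral_angle. rewrite mdot_sym.
  apply (final_ineq (mdot n1 n) (mdot n1 v) (mdot u1 n) s d theta Hd).
  - lra.
  - rewrite (mdot_sym u1 u) in Hu1. rewrite <- Hcos in Hu1. pose proof (sin2_cos2 theta). unfold Rsqr in *. nra.
  - rewrite ?(mdot_sym v n1) in *. nra.
Qed.
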